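(* For every modal formula $A$: if $\mathsf{BIGL}\models A$ then $\mathsf{PIGL}\models A$.
   Context: Modal formulas: $A ::= p \mid \bot \mid A\wedge A \mid A \vee A \mid A \to A \mid \Box A \mid \Diamond A$ over propositional symbols $\mathsf{Pr}$. Birelational models $\mathcal B=(W,\le,R^{\mathcal B},V)$: nonempty $W$, partial order $\le$, $R^{\mathcal B}\subseteq W^2$ with (F1) $w\le w',wR^{\mathcal B}v\Rightarrow\exists v'(v\le v'\wedge w'R^{\mathcal B}v')$ and (F2) $wR^{\mathcal B}v,v\le v'\Rightarrow\exists w'(w\le w'\wedge w'R^{\mathcal B}v')$, monotone valuation $V:W\to\mathcal P(\mathsf{Pr})$. Satisfaction: $p$ via $V$; $\bot$ never; $\wedge,\vee$ pointwise; $w\models A\to B$ iff every $w'\ge w$ satisfying $A$ satisfies $B$; $w\models\Box A$ iff for all $w'\ge w$ and $v$ with $w'R^{\mathcal B}v$, $v\models A$; $w\models\Diamond A$ iff some $v$ with $wR^{\mathcal B}v$ satisfies $A$. $\mathsf{BIGL}$ is the class of birelational models with $R^{\mathcal B}$ transitive and no infinite chain $x_1\le y_1R^{\mathcal B}x_2\le y_2R^{\mathcal B}x_3\cdots$; $\mathsf{BIGL}\models A$ means every world of every such model satisfies $A$. A Kripke structure $\mathcal K$: a nonempty poset $(W,\le)$; nonempty domains $D_w$ with $D_w\subseteq D_{w'}$ for $w\le w'$; maps $\mathsf{Pr}_w:\mathsf{Pr}\to\mathcal P(D_w)$, monotone in $w$; relations $R_w\subseteq D_w\times D_w$ with $R_w\subseteq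 R_{w'}$ for $w\le w'$. A $w$-environment is $\rho:\mathrm{Var}\to D_w$. $\mathcal K,w\models^\rho x:A$ is defined by: $x:p$ iff $\rho(x)\in\mathsf{Pr}_w(p)$; $\bot$ never; $\wedge,\vee$ pointwise; $x:A\to B$ iff for all $w'\ge w$, $\mathcal K,w'\models^\rho x:A$ implies $\mathcal K,w'\models^\rho x:B$; $x:\Box A$ iff for all $w'\ge w$ and $d\in D_{w'}$ with $\rho(x)R_{w'}d$, $\mathcal K,w'\models^{\rho[y:=d]}y:A$; $x:\Diamond A$ iff there is $d\in D_w$ with $\rho(x)R_wd$ and $\mathcal K,w\models^{\rho[y:=d]}y:A$. With $D_W=\{(w,d):d\in D_w\}$, $(w,d)\le_{D_W}(w',d')$ iff $w\le w'$ and $d=d'$, and $(w,d)R_{D_W}(w',d')$ iff $w=w'$ and $dR_wd'$, $\mathsf{PIGL}$ is the class of Kripke structures with every $R_w$ transitive and no infinite path $(w_1,d_1)\le_{D_W}(w_2,d_1)R_{D_W}(w_2,d_2)\le_{D_W}(w_3,d_2)R_{D_W}\cdots$. $\mathsf{PIGL}\models A$ means $\mathcal K,w\models^\rho x:A$ for all $\mathcal K\in\mathsf{PIGL}$, all worlds $w$, all $w$-environments $\rho$, and all variables $x$. *)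

(* Defs.v *)
Set Implicit Arguments.

Inductive form (Pr : Type) : Type :=
| FVar : Pr -> form Pr
| FBot : form Pr
| FAnd : form Pr -> form Pr -> form Pr
| FOr  : form Pr -> form Pr -> form Pr
| FImp : form Pr -> form Pr -> form Pr
| FBox : form Pr -> form Pr
| FDia : form Pr -> form Pr.
Arguments FBot {Pr}.

Record BModel (Pr : Type) : Type := {
  bW : Type;
  ble : bW -> bW -> Prop;
  bR : bW -> bW -> Prop;
  bV : bW -> Pr -> Prop;
  bW_nonempty : inhabited bW;
  ble_refl : forall w, ble w w;
  ble_trans : forall u v w, ble u v -> ble v w -> ble u w;
  ble_antisym : forall u v, ble u v -> ble v u -> u = v;
  bF1 : forall w w' v, ble w w' -> bR w v -> exists v', ble v v' /\ bR w' v';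
  bF2 : forall w v v', bR w v -> ble v v' -> exists w', ble w w' /\ bR w' v';
  bV_mono : forall w w' p, ble w w' -> bV w p -> bV w' p
}.

Fixpoint bsat (Pr : Type) (M : BModel Pr) (w : bW M) (A : form Pr) : Prop :=
  match A with
  | FVar p => bV M w p
  | FBot => False
  | FAnd B C => bsat M w B /\ bsat M w C
  | FOr B C => bsat M w B \/ bsat M w C
  | FImp B C => forall w', ble M w w' -> bsat M w' B -> bsat M w' C
  | FBox B => forall w' v, ble M w w' -> bR M w' v -> bsat M v B
  | FDia B => exists v, bR M w v /\ bsat M v B
  end.

Definition in_BIGL (Pr : Type) (M : BModel Pr) : Prop :=
  (forall u v w, bR M u v -> bR M v w -> bR M u w) /\
  ~ (exists (x y : nat -> bW M),
        forall n, ble M (x n) (y n) /\ bR M (y n) (x (S n))).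

Definition BIGL_valid (Pr : Type) (A : form Pr) : Prop :=
  forall M : BModel Pr, in_BIGL M -> forall w : bW M, bsat M w A.

Definition var := nat.

Record KStruct (Pr : Type) : Type := {
  kW : Type;
  kle : kW -> kW -> Prop;
  kU : Type;
  kD : kW -> kU -> Prop;
  kPr : kW -> Pr -> kU -> Prop;
  kR : kW -> kU -> kU -> Prop;
  kW_nonempty : inhabited kW;
  kle_refl : forall w, kle w w;
  kle_trans : forall u v w, kle u v -> kle v w -> kle u w;
  kle_antisym : forall u v, kle u v -> kle v u -> u = v;
  kD_nonempty : forall w, exists d, kD w d;
  kD_mono : forall w w' d, kle w w' -> kD w d -> kD w' d;
  kPr_dom : forall w p d, kPr w p d -> kD w d;
  kPr_mono : forall w w' p d, kle w w' -> kPr w p d -> kPr w' p d;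
  kR_dom : forall w d e, kR w d e -> kD w d /\ kD w e;
  kR_mono : forall w w' d e, kle w w' -> kR w d e -> kR w' d e
}.

Definition env_at (Pr : Type) (K : KStruct Pr) (w : kW K) (rho : var -> kU K) : Prop :=
  forall x, kD K w (rho x).

Definition upd (U : Type) (rho : var -> U) (y : var) (d : U) : var -> U :=
  fun z => if Nat.eqb z y then d else rho z.

(** The bound variable [y] in the Box/Diamond clauses is chosen as [S x]. *)
Fixpoint ksat (Pr : Type) (K : KStruct Pr) (w : kW K) (rho : var -> kU K)
  (x : var) (A : form Pr) : Prop :=
  match A with
  | FVar p => kPr K w p (rho x)
  | FBot => False
  | FAnd B C => ksat K w rho x B /\ ksat K w rho x C
  | FOr B C => ksat K w rho x B \/ ksat K w rho x C
  | FImp B C => forall w', kle K w w' -> ksat K w' rho x B -> ksat K w' rho x C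
  | FBox B => forall w' d, kle K w w' -> kD K w' d -> kR K w' (rho x) d ->
                ksat K w' (upd rho (S x) d) (S x) B
  | FDia B => exists d, kD K w d /\ kR K w (rho x) d /\
                ksat K w (upd rho (S x) d) (S x) B
  end.

Definition in_PIGL (Pr : Type) (K : KStruct Pr) : Prop :=
  (forall w d e f, kR K w d e -> kR K w e f -> kR K w d f) /\
  ~ (exists (ws : nat -> kW K) (ds : nat -> kU K),
        forall n, kD K (ws n) (ds n) /\ kle K (ws n) (ws (S n)) /\
                  kR K (ws (S n)) (ds n) (ds (S n))).

Definition PIGL_valid (Pr : Type) (A : form Pr) : Prop :=
  forall K : KStruct Pr, in_PIGL K ->
  forall (w : kW K) (rho : var -> kU K), env_at K w rho ->
  forall x : var, ksat K w rho x A.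

(* Main.v *)
Require Import Defs.
From Stdlib Require Import ProofIrrelevance Arith.

Section Constr.
Variable Pr : Type.
Variable K : KStruct Pr.

Record Wd : Type := mkWd { ww : kW K; wd : kU K; wH : kD K ww wd }.

Definition Mle (u v : Wd) : Prop := kle K (ww u) (ww v) /\ wd u = wd v.
Definition MR (u v : Wd) : Prop := ww u = ww v /\ kR K (ww u) (wd u) (wd v).
Definition MV (u : Wd) (p : Pr) : Prop := kPr K (ww u) p (wd u).

Lemma Wd_inh : inhabited Wd.
Proof.
  destruct (kW_nonempty K) as [w]. destruct (kD_nonempty K w) as [d Hd].
  exact (inhabits (mkWd w d Hd)).
Qed.

Lemma Mle_refl : forall w, Mle w w.
Proof. intros w; split; [apply kle_refl | reflexivity]. Qed.

Lemma Mle_trans : forall u v w, Mle u v -> Mle v w -> Mle u w.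
Proof.
  intros u v w [H1 H2] [H3 H4]; split; [eapply kle_trans; eauto | congruence].
Qed.

Lemma Mle_antisym : forall u v, Mle u v -> Mle v u -> u = v.
Proof.
  intros [w1 d1 h1] [w2 d2 h2] [H1 H2] [H3 H4]; simpl in *.
  pose proof (kle_antisym K _ _ H1 H3). subst. f_equal. apply proof_irrelevance.
Qed.

Lemma MF1 : forall w w' v, Mle w w' -> MR w v -> exists v', Mle v v' /\ MR w' v'.
Proof.
  intros [w1 d1 h1] [w2 d2 h2] [w3 d3 h3] [H1 H2] [H3 H4]; simpl in *. subst.
  exists (mkWd w2 d3 (kD_mono K _ _ _ H1 h3)). unfold Mle, MR; simpl.
  split; split; auto. eapply kR_mono; eauto.
Qed.

Lemma MF2 : forall w v v', MR w v -> Mle v v' -> exists w', Mle w w' /\ MR w' v'.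
Proof.
  intros [w1 d1 h1] [w2 d2 h2] [w3 d3 h3] [H1 H2] [H3 H4]; simpl in *. subst.
  exists (mkWd w3 d1 (kD_mono K _ _ _ H3 h1)). unfold Mle, MR; simpl.
  split; split; auto. eapply kR_mono; eauto.
Qed.

Lemma MV_mono : forall w w' p, Mle w w' -> MV w p -> MV w' p.
Proof.
  intros [w1 d1 h1] [w2 d2 h2] p [H1 H2] H; unfold MV in *; simpl in *. subst.
  eapply kPr_mono; eauto.
Qed.

Definition M : BModel Pr :=
  {| bW := Wd; ble := Mle; bR := MR; bV := MV; bW_nonempty := Wd_inh;
     ble_refl := Mle_refl; ble_trans := Mle_trans; ble_antisym := Mle_antisym;
     bF1 := MF1; bF2 := MF2; bV_mono := MV_mono |}.

Lemma upd_same (U : Type) (rho : var -> U) y d : upd rho y d y = d.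
Proof. unfold upd. rewrite Nat.eqb_refl. reflexivity. Qed.

Lemma truth : forall A w rho x (v : Wd), ww v = w -> wd v = rho x ->
  (ksat K w rho x A <-> bsat M v A).
Proof.
  induction A; intros w rho x v E1 E2; simpl.
  - unfold MV. rewrite E1, E2. tauto.
  - tauto.
  - rewrite (IHA1 w rho x v E1 E2), (IHA2 w rho x v E1 E2). tauto.
  - rewrite (IHA1 w rho x v E1 E2), (IHA2 w rho x v E1 E2). tauto.
  - split.
    + intros H v' [L1 L2] Hb.
      apply (IHA2 (ww v') rho x v' eq_refl (eq_trans (eq_sym L2) E2)).
      apply H. rewrite <- E1; exact L1.
      apply (IHA1 (ww v') rho x v' eq_refl (eq_trans (eq_sym L2) E2)). exact Hb.
    + intros H w' L Hk.
      assert (Hd : kD K w' (rho x)).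
      { rewrite <- E2. apply (kD_mono K (ww v)). rewrite E1; exact L. apply wH. }
      apply (IHA2 w' rho x (mkWd w' (rho x) Hd) eq_refl eq_refl).
      apply H. split; simpl; [rewrite E1; exact L | exact E2].
      apply (IHA1 w' rho x (mkWd w' (rho x) Hd) eq_refl eq_refl). exact Hk.
  - split.
    + intros H v1 v2 [L1 L2] [R1 R2].
      assert (Hk : kle K w (ww v2)) by (rewrite <- E1, <- R1; exact L1).
      pose proof (H (ww v2) (wd v2) Hk (wH v2)) as H'.
      rewrite <- E2, L2 in H'. rewrite R1 in R2. specialize (H' R2).
      apply (IHA (ww v2) (upd rho (S x) (wd v2)) (S x) v2 eq_refl).
      symmetry; apply upd_same. exact H'.
    + intros H w' d L Hd Hr.
      assert (Hd0 : kD K w' (rho x)).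
      { rewrite <- E2. apply (kD_mono K (ww v)). rewrite E1; exact L. apply wH. }
      apply (IHA w' (upd rho (S x) d) (S x) (mkWd w' d Hd) eq_refl).
      simpl; symmetry; apply upd_same.
      apply (H (mkWd w' (rho x) Hd0)).
      split; simpl; [rewrite E1; exact L | exact E2].
      split; simpl; [reflexivity | exact Hr].
  - split.
    + intros [d [Hd [Hr Hs]]].
      exists (mkWd w d Hd). split.
      * split; simpl; [auto | rewrite E1, E2; exact Hr].
      * apply (IHA w (upd rho (S x) d) (S x) (mkWd w d Hd) eq_refl).
        simpl; symmetry; apply upd_same. exact Hs.
    + intros [v' [[R1 R2] Hb]].
      exists (wd v'). split; [| split].
      * rewrite <- E1, R1. apply wH.
      * rewrite <- E1, <- E2. exact R2.
      * apply (IHA w (upd rho (S x) (wd v')) (S x) v').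
        rewrite <- E1; symmetry; exact R1.
        symmetry; apply upd_same. exact Hb.
Qed.

Lemma M_BIGL : in_PIGL K -> in_BIGL M.
Proof.
  intros [Ht Hn]. split.
  - intros u v w [R1 R2] [R3 R4]; simpl in *. split; [congruence|].
    rewrite <- R1 in R4. eapply Ht; eauto.
  - intros [xs [ys H]]. apply Hn.
    exists (fun n => ww (xs n)), (fun n => wd (xs n)). intros n.
    destruct (H n) as [[L1 L2] [R1 R2]]; simpl in *.
    split; [apply wH | split].
    + rewrite <- R1; exact L1.
    + rewrite L2, <- R1. exact R2.
Qed.

End Constr.

Theorem mainTheorem7 (Pr : Type) (A : form Pr) :
  BIGL_valid A -> PIGL_valid A.
Proof.
  intros HB K HK w rho Henv x.
  apply (@truth Pr K A w rho x (@mkWd Pr K w (rho x) (Henv x)) eq_refl eq_refl).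
  apply HB. apply M_BIGL. exact HK.
Qed.
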